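(* Let $\boldsymbol\mu\in\mathcal{P}(\Phi)$ and suppose $k=\|\boldsymbol\mu\|+\ell(\boldsymbol\mu^e)\le n$. Then the centralizer $\mathcal A_{\boldsymbol\mu^{\uparrow n}}$ of $J_{\boldsymbol\mu^{\uparrow n}}$ in $G_n$ has cardinality $$|\mathcal A_{\boldsymbol\mu^{\uparrow k}}|\cdot|G_{n-k}|\cdot\big|\{B\in M_{k\times(n-k)}(\mathbb F_q)\mid J_{\boldsymbol\mu^{\uparrow k}}B=B\}\big|\cdot\big|\{C\in M_{(n-k)\times k}(\mathbb F_q)\mid CJ_{\boldsymbol\mu^{\uparrow k}}=C\}\big|,$$ where $\mathcal A_{\boldsymbol\mu^{\uparrow k}}$ is the centralizer of $J_{\boldsymbol\mu^{\uparrow k}}$ in $G_k$.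
   Context: $q$ is a prime power, $G_n=GL_n(\mathbb F_q)$, $M_{a\times b}(\mathbb F_q)$ the $a\times b$ matrices. $\Phi$ is the set of monic irreducible polynomials in $\mathbb F_q[t]$ other than $t$, $d(f)$ the degree of $f$; $\mathcal{P}(\Phi)$ is the set of finitely supported maps $\boldsymbol\lambda$ from $\Phi$ to partitions, $\|\boldsymbol\lambda\|=\sum_f d(f)|\boldsymbol\lambda(f)|$, $\boldsymbol\lambda^e=\boldsymbol\lambda(t-1)$, $\ell$ = number of nonzero parts. For $f=t^d-\sum_{i=1}^d a_it^{i-1}\in\Phi$, $J(f)$ is the $d\times d$ companion matrix with $1$'s on the superdiagonal, last row $(a_1,\dots,a_d)$, zeros elsewhere; $J_m(f)$ is the $dm\times dm$ block upper triangular matrix with $m$ diagonal blocks $J(f)$ and blocks $I_d$ on the block superdiagonal. $J_{\boldsymbol\lambda}$ is the block diagonal matrix with blocks $J_{\boldsymbol\lambda_i(f)}(f)$ over all $f,i$, blocks for $f\ne t-1$ first, then those for $t-1$ in nonincreasing size. For $r=\ell(\boldsymbol\mu^e)$ and $n\ge\|\boldsymbol\mu\|+r$, $\boldsymbol\mu^{\uparrow n}$ agrees with $\boldsymbol\mu$ off $t-1$ and $\boldsymbol\mu^{\uparrow n}(t-1)=(\boldsymbol\mu^e_1+1,\dots,\boldsymbol\mu^e_r+1,1,\dots,1)$ with $n-r-\|\boldsymbol\mu\|$ trailing ones. *)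

(* Defs.v *)
From HB Require Import structures.
From mathcomp Require Import all_boot all_order all_algebra all_field.
Set Implicit Arguments. Unset Strict Implicit. Unset Printing Implicit Defensive.
Import GRing.Theory.
Local Open Scope ring_scope.

Section Defs.
Variable F : finFieldType.

Definition pdeg (f : {poly F}) : nat := (size f).-1.

Definition inPhi (f : {poly F}) : Prop :=
  f \is monic /\ irreducible_poly f /\ f != 'X.

Definition is_partition (l : seq nat) : bool :=
  sorted geq l && all (fun x => 0 < x)%N l.

(* An element of P(Phi), represented by the list of its (f, boldlambda(f)),
   f ranging over a finite set containing the support. *)
Definition wf_PPhi (mu : seq ({poly F} * seq nat)) : Prop :=
  uniq (map fst mu) /\
  (forall p, p \in mu -> inPhi p.1 /\ is_partition p.2).

Definition tm1 : {poly F} := 'X - 1.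

Definition pnorm (mu : seq ({poly F} * seq nat)) : nat :=
  \sum_(p <- mu) (pdeg p.1 * sumn p.2)%N.

Definition mue (mu : seq ({poly F} * seq nat)) : seq nat :=
  match [seq p <- mu | p.1 == tm1] with
  | p :: _ => p.2
  | [::] => [::]
  end.

Definition uparrow (mu : seq ({poly F} * seq nat)) (n : nat)
  : seq ({poly F} * seq nat) :=
  [seq p <- mu | p.1 != tm1] ++
  [:: (tm1, map S (mue mu) ++ nseq (n - size (mue mu) - pnorm mu) 1%N)].

(* entries (0-indexed) of the companion matrix J(f), d = d(f) *)
Definition J_entry (f : {poly F}) (r c : nat) : F :=
  if (r < (pdeg f).-1)%N then (c == r.+1)%:R else - f`_c.

Definition Jm_entry (f : {poly F}) (i j : nat) : F :=
  let d := pdeg f in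
  let bi := (i %/ d)%N in let bj := (j %/ d)%N in
  let r := (i %% d)%N in let c := (j %% d)%N in
  if bi == bj then J_entry f r c
  else if bj == bi.+1 then (r == c)%:R else 0.

Fixpoint blk_entry (s : seq ({poly F} * nat)) (i j : nat) : F :=
  match s with
  | [::] => 0
  | (f, m) :: s' =>
      let s0 := (pdeg f * m)%N in
      if (i < s0)%N then (if (j < s0)%N then Jm_entry f i j else 0)
      else if (j < s0)%N then 0 else blk_entry s' (i - s0) (j - s0)
  end.

(* list of blocks of J_lambda: first f <> t-1 (in list order), then t-1 ones
   in nonincreasing size (partitions are already nonincreasing) *)
Definition blocks (mu : seq ({poly F} * seq nat)) : seq ({poly F} * nat) :=
  flatten [seq [seq (p.1, m) | m <- p.2] | p <- mu & p.1 != tm1] ++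
  [seq (tm1, m) | m <- mue mu].

Definition Jmat (mu : seq ({poly F} * seq nat)) (N : nat) : 'M[F]_N :=
  \matrix_(i < N, j < N) blk_entry (blocks mu) i j.

Definition centralizer (N : nat) (J : 'M[F]_N) : {set 'M[F]_N} :=
  [set A : 'M[F]_N | (A \in unitmx) && (A *m J == J *m A)].

Definition GL_set (N : nat) : {set 'M[F]_N} := [set A : 'M[F]_N | A \in unitmx].

End Defs.

(* Main.v *)
Require Import Defs.
From HB Require Import structures.
From mathcomp Require Import all_boot all_order all_algebra all_field.
Set Implicit Arguments. Unset Strict Implicit. Unset Printing Implicit Defensive.
Import GRing.Theory.
Local Open Scope ring_scope.
Section Count.
Variable F : finFieldType.

Definition keyprop N (A : 'M[F]_N) := forall p q (R : 'M[F]_(p, N)) (Q : 'M[F]_(N, q)),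
  R *m A = R -> A *m Q = Q -> R *m Q = 0.

Lemma keyprop_block a b (A1 : 'M[F]_a) (A2 : 'M[F]_b) :
  keyprop A1 -> keyprop A2 -> keyprop (block_mx A1 0 0 A2).
Proof.
move=> k1 k2 p q R Q HR HQ.
rewrite -[R]hsubmxK -[Q]vsubmxK in HR HQ *.
rewrite mul_row_block !mulmx0 add0r addr0 in HR.
rewrite mul_block_col !mul0mx add0r addr0 in HQ.
case/eq_row_mx: HR => HR1 HR2; case/eq_col_mx: HQ => HQ1 HQ2.
by rewrite mul_row_col (k1 _ _ _ _ HR1 HQ1) (k2 _ _ _ _ HR2 HQ2) addr0.
Qed.

Lemma keyprop0 (A : 'M[F]_0) : keyprop A.
Proof. by move=> p q R Q _ _; apply/matrixP => i j; rewrite !mxE big_ord0. Qed.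

Lemma comm_block k m (A : 'M[F]_k) P Q R (S : 'M[F]_m) :
  (block_mx P Q R S *m block_mx A 0 0 1%:M == block_mx A 0 0 1%:M *m block_mx P Q R S)
  = [&& P *m A == A *m P, Q == A *m Q & R *m A == R].
Proof.
rewrite !mulmx_block !mulmx0 !mul0mx !mulmx1 !mul1mx !addr0 !add0r.
apply/idP/idP.
  by move=> /eqP H; case: (eq_block_mx H) => -> <- -> _; rewrite !eqxx.
by case/and3P=> /eqP -> /eqP <- /eqP ->.
Qed.

Lemma inv_comm N (P A : 'M[F]_N) : P \in unitmx -> P *m A = A *m P ->
  invmx P *m A = A *m invmx P.
Proof.
move=> uP e.
have : invmx P *m (P *m A) *m invmx P = invmx P *m (A *m P) *m invmx P by rewrite e.
by rewrite mulKmx // -!mulmxA mulmxV // mulmx1 => ->.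
Qed.

Lemma count_gen k m (A : 'M[F]_k) : keyprop A ->
  #|centralizer (block_mx A 0 0 (1%:M : 'M[F]_m))| =
    (#|centralizer A| * #|GL_set F m|
     * #|[set B : 'M[F]_(k, m) | A *m B == B]|
     * #|[set C : 'M[F]_(m, k) | C *m A == C]|)%N.
Proof.
move=> kA.
pose f (x : 'M[F]_k * 'M[F]_m * 'M[F]_(k,m) * 'M[F]_(m,k)) :=
  block_mx x.1.1.1 x.1.2 x.2 x.1.1.2.
have finj : injective f.
  move=> [[[P S] Q] R] [[[P' S'] Q'] R'] /eq_block_mx /= [-> -> -> ->] //.
rewrite -!cardsX -(card_imset _ finj); apply: eq_card => X.
rewrite inE; apply/andP/imsetP.
  case=> uX cX0; have cX := cX0.
  rewrite -[X]submxK comm_block in cX.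
  case/and3P: cX => /eqP cP /eqP cQ /eqP cR.
  set P := ulsubmx X in cP cR *; set Q := ursubmx X in cQ *;
  set R := dlsubmx X in cR *; set S := drsubmx X.
  pose Y := invmx X.
  have cY : Y *m block_mx A 0 0 1%:M == block_mx A 0 0 1%:M *m Y.
    by apply/eqP/inv_comm => //; exact/eqP.
  rewrite -[Y]submxK comm_block in cY.
  case/and3P: cY => /eqP cP' /eqP cQ' /eqP cR'.
  have XY : X *m Y = 1%:M by rewrite mulmxV.
  rewrite -[X]submxK -[Y]submxK mulmx_block (scalar_mx_block k m) in XY.
  case/eq_block_mx: XY => e1 _ _ e4.
  exists (P, S, Q, R); last by rewrite /f /= submxK.
  rewrite !inE /=.
  have RQ' : R *m ursubmx Y = 0 by apply: kA => //; rewrite -cQ'.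
  rewrite RQ' add0r in e4.
  have R'Q : dlsubmx Y *m Q = 0 by apply: kA => //; rewrite -cQ.
  have uS : S \in unitmx by case: (mulmx1_unit e4).
  have uP : P \in unitmx.
    have : P *m (ulsubmx Y *m (1%:M + Q *m dlsubmx Y)) = 1%:M.
      rewrite mulmxA; have -> : P *m ulsubmx Y = 1%:M - Q *m dlsubmx Y.
        by rewrite -e1 addrK.
      rewrite mulmxDr mulmx1 mulmxBl mul1mx -!mulmxA (mulmxA (dlsubmx Y)) R'Q.
      by rewrite mul0mx mulmx0 subr0 addrNK.
    by case/mulmx1_unit.
  by rewrite uP cP eqxx uS -cQ eqxx cR eqxx.
case=> [[[[P S] Q] R]]; rewrite !inE /= => /andP [/andP [/andP [/andP [uP cP] uS] cQ] cR] ->.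
rewrite /f /= comm_block cP cR eq_sym cQ; split => //.
have e : block_mx P Q R S = block_mx 1%:M 0 (R *m invmx P) 1%:M *m block_mx P Q 0 S.
  rewrite mulmx_block !mul1mx !mul0mx ?mulmx0 !addr0 (mulmxKV uP).
  have -> : R *m invmx P *m Q = 0.
    rewrite -mulmxA; apply: kA; first exact/eqP.
    by rewrite mulmxA -(inv_comm uP (eqP cP)) -mulmxA (eqP cQ).
  by rewrite add0r.
rewrite e unitmx_mul !unitmxE det_ublock det_lblock !det1 mul1r unitr1 /=.
by rewrite unitrM -!unitmxE uP uS.
Qed.
End Count.

Section Blocks.
Variable F : finFieldType.

Fixpoint bsz (s : seq ({poly F} * nat)) : nat :=
  match s with [::] => 0%N | (f, m) :: s' => (pdeg f * m + bsz s')%N end.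

Definition Jmx (f : {poly F}) m : 'M[F]_(pdeg f * m) := \matrix_(i, j) Jm_entry f i j.

Fixpoint bmx (s : seq ({poly F} * nat)) : 'M[F]_(bsz s) :=
  match s return 'M[F]_(bsz s) with
  | [::] => 0
  | (f, m) :: s' => block_mx (Jmx f m) 0 0 (bmx s')
  end.

Lemma bmxE s (i j : 'I_(bsz s)) : bmx s i j = blk_entry s i j.
Proof.
elim: s i j => [|[f m] s IH] i j /=; first by case: i.
rewrite -[i](splitK) -[j]splitK.
case: (split i) => i'; case: (split j) => j' /=.
- by rewrite block_mxEul mxE /= ltn_ord ltn_ord.
- by rewrite block_mxEur mxE /= ltn_ord ltnNge leq_addr.
- by rewrite block_mxEdl mxE /= ltn_ord ltnNge leq_addr.
- by rewrite block_mxEdr IH /= !ltnNge !leq_addr /= !addKn.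
Qed.

Lemma keyprop_bmx s : (forall p, p \in s -> keyprop (Jmx p.1 p.2)) -> keyprop (bmx s).
Proof.
elim: s => [|[f m] s IH] H /=; first exact: keyprop0.
apply: keyprop_block; first exact: (H (f, m) (mem_head _ _)).
by apply: IH => p ps; apply: H; rewrite inE ps orbT.
Qed.

Lemma keyprop_Jmat s N : bsz s = N -> (forall p, p \in s -> keyprop (Jmx p.1 p.2)) ->
  keyprop (\matrix_(i < N, j < N) blk_entry s i j).
Proof.
move=> e H; subst N.
have -> : \matrix_(i < bsz s, j < bsz s) blk_entry s i j = bmx s.
  by apply/matrixP => i j; rewrite mxE bmxE.
exact: keyprop_bmx.
Qed.

End Blocks.

Section Jordan.
Variable F : finFieldType.

Lemma sum_delta N (G : 'I_N -> F) (k : 'I_N) :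
  \sum_(j < N) G j * ((j : nat) == k)%:R = G k.
Proof.
rewrite (bigD1 k) //= eqxx mulr1 big1 ?addr0 // => j /negbTE.
by move=> H; rewrite (_ : ((j : nat) == k) = false) ?mulr0.

Qed.

Lemma sum_deltal N (G : 'I_N -> F) (k : 'I_N) :
  \sum_(j < N) ((j : nat) == k)%:R * G j = G k.
Proof. by rewrite -[RHS](sum_delta G); apply: eq_bigr => j _; rewrite mulrC. Qed.

Lemma keyprop_jordan N (A : 'M[F]_N) : (1 < N)%N ->
  (forall i j : 'I_N, A i j = (i == j)%:R + ((j : nat) == i.+1)%:R) -> keyprop A.
Proof.
move=> N2 HA p q R Q HR HQ.
pose Nm : 'M[F]_N := \matrix_(i, j) ((j : nat) == i.+1)%:R.
have eA : A = 1%:M + Nm by apply/matrixP => i j; rewrite !mxE HA.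
have HR0 : R *m Nm = 0.
  by apply: (addrI R); rewrite addr0 -{3}HR eA mulmxDr mulmx1.
have HQ0 : Nm *m Q = 0.
  by apply: (addrI Q); rewrite addr0 -{3}HQ eA mulmxDl mul1mx.
have Rz : forall x (i : 'I_N), (i.+1 < N)%N -> R x i = 0.
  move=> x i Hi; have := congr1 (fun M : 'M_(p, N) => M x (Ordinal Hi)) HR0.
  rewrite !mxE /=.
  under eq_bigr do rewrite mxE /= eqSS eq_sym.
  by rewrite sum_delta.
have Qz : forall (i : 'I_N) y, (0 < i)%N -> Q i y = 0.
  move=> i y Hi.
  have Hi' : (i.-1 < N)%N by rewrite (leq_ltn_trans (leq_pred _)).
  have := congr1 (fun M : 'M_(N, q) => M (Ordinal Hi') y) HQ0.
  rewrite !mxE /=.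
  under eq_bigr do rewrite mxE /= prednK //.
  by rewrite sum_deltal.
apply/matrixP => x y; rewrite !mxE big1 // => i _.
case: (posnP i) => [i0|ip]; last by rewrite Qz // mulr0.
by rewrite Rz ?mul0r // i0.
Qed.

End Jordan.

Section NonUnip.
Variable F : finFieldType.

Lemma sum_nat_delta n (G : nat -> F) k : (k < n)%N ->
  \sum_(0 <= c < n) (c == k)%:R * G c = G k.
Proof.
move=> kn; rewrite big_mkord.
exact: (sum_deltal (fun c : 'I_n => G c) (Ordinal kn)).
Qed.

Lemma row_eq (f : {poly F}) m (w : nat -> F) b r : (0 < pdeg f)%N -> (b < m)%N ->
  (r < pdeg f)%N -> (forall j, (b.+1 * pdeg f <= j)%N -> w j = 0) ->
  \sum_(0 <= j < pdeg f * m) Jm_entry f (b * pdeg f + r)%N j * w j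
  = \sum_(0 <= c < pdeg f) J_entry f r c * w (b * pdeg f + c)%N.
Proof.
move=> hd hb hr hw.
have hbd : (b * pdeg f + pdeg f <= pdeg f * m)%N.
  by rewrite addnC -mulSn mulnC leq_mul2l hb orbT.
have hi : ((b * pdeg f + r) %/ pdeg f = b)%N by rewrite divnMDl // divn_small // addn0.
have hr' : ((b * pdeg f + r) %% pdeg f = r)%N by rewrite modnMDl modn_small.
rewrite (big_cat_nat _ (n := (b * pdeg f + pdeg f)%N)) //=.
rewrite (big_cat_nat _ (n := (b * pdeg f)%N)) //= ?leq_addr //.
have e1 : \sum_(0 <= j < b * pdeg f) Jm_entry f (b * pdeg f + r)%N j * w j = 0.
  rewrite big_nat_cond big1 // => j /andP [/andP [_ hj] _].
  rewrite /Jm_entry /= hi.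
  have hj' : (j %/ pdeg f < b)%N by rewrite ltn_divLR.
  by rewrite (gtn_eqF hj') (ltn_eqF (ltn_trans hj' (ltnSn b))) mul0r.
have e3 : \sum_(b * pdeg f + pdeg f <= j < pdeg f * m) Jm_entry f (b * pdeg f + r)%N j * w j = 0.
  rewrite big_nat_cond big1 // => j /andP [/andP [hj _] _]; rewrite hw ?mulr0 //.
  by rewrite mulSn addnC.
rewrite e1 e3 add0r addr0.
rewrite (big_addn 0 _ (b * pdeg f)) addKn; apply: eq_big_nat => c /andP [_ hc].
rewrite /Jm_entry /= hi hr' addnC divnMDl // divn_small // addn0 eqxx.
by rewrite modnMDl modn_small.
Qed.

Lemma f1_neq0 (f : {poly F}) : inPhi f -> f != tm1 F -> f.[1] != 0.
Proof.
case=> mf [irr _] nf; apply/negP => /rootP r1.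
have : ('X - 1%:P) %| f by rewrite dvdp_XsubCl; exact/rootP.
move/(irr.2 _ _) => /=; rewrite size_XsubC => /(_ isT).
rewrite eqp_monic ?monicXsubC // polyC1 => /eqP e.
by move/negP: nf; apply; rewrite -e /tm1.
Qed.

Lemma pdeg_gt0 (f : {poly F}) : inPhi f -> (0 < pdeg f)%N.
Proof. by case=> _ [[s _] _]; rewrite /pdeg -ltnS prednK // ltnW. Qed.

Lemma jm_kernel (f : {poly F}) m (w : nat -> F) : inPhi f -> f != tm1 F ->
  (forall j, (pdeg f * m <= j)%N -> w j = 0) ->
  (forall i, (i < pdeg f * m)%N ->
     \sum_(0 <= j < pdeg f * m) Jm_entry f i j * w j = w i) ->
  forall i, w i = 0.
Proof.
move=> fP nf hout hrow.
have hd := pdeg_gt0 fP.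
have f1 := f1_neq0 fP nf.
suff H : forall t, (t <= m)%N -> forall j, ((m - t) * pdeg f <= j)%N -> w j = 0.
  by move=> i; apply: (H m) => //; rewrite subnn.
elim => [|t IH] Ht j Hj.
  by apply: hout; rewrite mulnC -(subn0 m).
have hb : (m - t = (m - t.+1).+1)%N by rewrite subnSK.
set b := (m - t.+1)%N in hb.
have IH' : forall j, (b.+1 * pdeg f <= j)%N -> w j = 0.
  by move=> j' hj'; apply: IH; [exact: ltnW | rewrite hb].
case: (leqP (b.+1 * pdeg f) j) => [|hj]; first exact: IH'.
have hbm : (b < m)%N by rewrite /b subnSK // leq_subr.
have hrow' : forall r, (r < pdeg f)%N ->
   \sum_(0 <= c < pdeg f) J_entry f r c * w (b * pdeg f + c)%N = w (b * pdeg f + r)%N.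
  move=> r hr; rewrite -(row_eq (m := m)) //; apply: hrow.
  rewrite (leq_trans (n := (b * pdeg f + pdeg f)%N)) ?ltn_add2l //.
  by rewrite addnC -mulSn mulnC leq_mul2l hbm orbT.
have hconst : forall r, (r < pdeg f)%N -> w (b * pdeg f + r)%N = w (b * pdeg f)%N.
  elim => [|r IHr] hr; first by rewrite addn0.
  rewrite -IHr ?(ltnW hr) //.
  have := hrow' r (ltnW hr).
  have hr1 : (r < (pdeg f).-1)%N by rewrite -ltnS prednK.
  under eq_big_nat => c _ do rewrite /J_entry hr1.
  by rewrite sum_nat_delta.
have hx : w (b * pdeg f)%N = 0.
  have hd1 : ((pdeg f).-1 < pdeg f)%N by rewrite prednK.
  have := hrow' _ hd1.
  under eq_big_nat => c /andP[_ hc] do rewrite /J_entry ltnn (hconst c hc).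
  rewrite (hconst _ hd1) big_mkord => e.
  have : w (b * pdeg f)%N * f.[1] = 0.
    rewrite horner_coef.
    have -> : size f = (pdeg f).+1 by rewrite /pdeg prednK // (leq_trans _ fP.2.1.1).
    rewrite big_ord_recr /=.
    have -> : f`_(pdeg f) = 1 by have := monicP fP.1; rewrite lead_coefE /pdeg.
    rewrite expr1n mulr1 mulrDr mulr1 -{2}e big_distrr /= -big_split /= big1 // => i _.
    by rewrite expr1n mulr1 mulNr mulrC addrN.
  by move/eqP; rewrite mulf_eq0 (negbTE f1) orbF => /eqP.
rewrite -(subnKC Hj) hconst // ltn_subLR // addnC -mulSn //.
Qed.

End NonUnip.

Section Single.
Variable F : finFieldType.

Lemma jm_fix0 (f : {poly F}) m q (Q : 'M[F]_(pdeg f * m, q)) : inPhi f -> f != tm1 F ->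
  Jmx f m *m Q = Q -> Q = 0.
Proof.
move=> fP nf HQ; apply/matrixP => i y.
pose w (j : nat) := oapp (fun o : 'I_(pdeg f * m) => Q o y) 0 (insub j).
have wo : forall o : 'I_(pdeg f * m), w o = Q o y by move=> o; rewrite /w valK.
rewrite mxE -wo; apply: (jm_kernel (m := m) fP nf).
  by move=> j hj; rewrite /w insubF //= ltnNge hj.
move=> i' hi; rewrite big_mkord.
have := congr1 (fun M : 'M_(pdeg f * m, q) => M (Ordinal hi) y) HQ.
rewrite mxE -[X in _ = X -> _](wo (Ordinal hi)) /= => <-.
by apply: eq_bigr => j _; rewrite mxE wo.
Qed.

Lemma keyprop_f (f : {poly F}) m : inPhi f -> f != tm1 F -> keyprop (Jmx f m).
Proof. by move=> fP nf p q R Q _ HQ; rewrite (jm_fix0 fP nf HQ) mulmx0. Qed.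

Lemma size_tm1 : size (tm1 F) = 2%N.
Proof. by rewrite /tm1 -polyC1 size_XsubC. Qed.

Lemma pdeg_tm1 : pdeg (tm1 F) = 1%N.
Proof. by rewrite /pdeg size_tm1. Qed.

Lemma coef0_tm1 : (tm1 F)`_0 = -1.
Proof. by rewrite /tm1 coefB coefX coef1 sub0r. Qed.

Lemma Jm_entry_tm1 i j : Jm_entry (tm1 F) i j = (i == j)%:R + (j == i.+1)%:R.
Proof.
rewrite /Jm_entry /= pdeg_tm1 !divn1 !modn1 /J_entry /= coef0_tm1 opprK.
rewrite pdeg_tm1 /=.
case: (i =P j) => [->|ne]; first by rewrite (ltn_eqF (ltnSn j)) addr0.
by rewrite add0r; case: (j =P i.+1).
Qed.

Lemma keyprop_tm1 m : (1 < m)%N -> keyprop (Jmx (tm1 F) m).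
Proof.
move=> hm; apply: keyprop_jordan; first by rewrite pdeg_tm1 mul1n.
by move=> i j; rewrite mxE Jm_entry_tm1.
Qed.

End Single.

Section Lists.
Variable F : finFieldType.
Local Notation tm := (tm1 F).
Implicit Types (mu : seq ({poly F} * seq nat)).

Definition S0 mu := flatten [seq [seq (p.1, m) | m <- p.2] | p <- mu & p.1 != tm].

Lemma filter_up mu N : [seq p <- uparrow mu N | p.1 != tm] = [seq p <- mu | p.1 != tm].
Proof.
rewrite /uparrow filter_cat /= eqxx /= cats0.
by elim: mu => //= p s IH; case: ifP => //= ->; rewrite IH.
Qed.

Lemma mue_up mu N : mue (uparrow mu N) = map S (mue mu) ++ nseq (N - size (mue mu) - pnorm mu) 1%N.
Proof.
rewrite {1}/mue /uparrow filter_cat /= eqxx.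
have -> : [seq p <- [seq p <- mu | p.1 != tm] | p.1 == tm] = [::].
  by elim: mu => //= p s IH; case: ifP => //= /negbTE ->.
by [].
Qed.

Lemma blocks_up mu N : blocks (uparrow mu N) =
  S0 mu ++ [seq (tm, m) | m <- map S (mue mu) ++ nseq (N - size (mue mu) - pnorm mu) 1%N].
Proof. by rewrite /blocks filter_up mue_up. Qed.

Lemma bsz_cat (s1 s2 : seq ({poly F} * nat)) : bsz (s1 ++ s2) = (bsz s1 + bsz s2)%N.
Proof. by elim: s1 => //= [[f m] s IH]; rewrite IH addnA. Qed.

Lemma bsz_map (f : {poly F}) (l : seq nat) : bsz [seq (f, m) | m <- l] = (pdeg f * sumn l)%N.
Proof. by elim: l => [|x l IH] /=; rewrite ?muln0 // IH mulnDr. Qed.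

Lemma bsz_S0 mu : bsz (S0 mu) = (\sum_(p <- mu | p.1 != tm) pdeg p.1 * sumn p.2)%N.
Proof.
rewrite -big_filter /S0; elim: [seq p <- mu | p.1 != tm] => [|p l IH] /=.
  by rewrite big_nil.
by rewrite bsz_cat bsz_map IH big_cons.
Qed.

Lemma blk_cat (s1 s2 : seq ({poly F} * nat)) i j :
  blk_entry (s1 ++ s2) i j =
  if (i < bsz s1)%N then (if (j < bsz s1)%N then blk_entry s1 i j else 0)
  else if (j < bsz s1)%N then 0 else blk_entry s2 (i - bsz s1) (j - bsz s1).
Proof.
elim: s1 i j => [|[f m] s IH] i j /=; first by rewrite !subn0.
case: (ltnP i (pdeg f * m)) => hi.
  rewrite (leq_trans hi (leq_addr _ _)).
  by case: (ltnP j (pdeg f * m)) => hj; [rewrite (leq_trans hj (leq_addr _ _)) | case: ifP].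
case: (ltnP j (pdeg f * m)) => hj.
  by rewrite (leq_trans hj (leq_addr _ _)); case: ifP.
by rewrite IH -!ltn_subLR // !subnDA.
Qed.

Lemma blk_ones m i j : blk_entry (nseq m (tm, 1%N)) i j = ((i == j) && (i < m)%N)%:R.
Proof.
elim: m i j => [|m IH] i j /=; first by rewrite andbF.
rewrite pdeg_tm1 muln1.
case: i => [|i]; case: j => [|j] //=.
- by rewrite Jm_entry_tm1 /= addr0.
- by rewrite !subn1 /= IH.
Qed.

Lemma filter_tm1_size mu : wf_PPhi mu -> (size [seq p <- mu | p.1 == tm] <= 1)%N.
Proof.
case=> u _; rewrite size_filter.
have -> : count (fun p => p.1 == tm) mu = count_mem tm (map fst mu) by rewrite count_map.
by rewrite count_uniq_mem // leq_b1.
Qed.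

Lemma pnorm_split mu : wf_PPhi mu ->
  pnorm mu = (\sum_(p <- mu | p.1 != tm) pdeg p.1 * sumn p.2 + sumn (mue mu))%N.
Proof.
move=> wf; rewrite /pnorm (bigID (fun p => p.1 == tm)) /= addnC; congr (_ + _)%N.
rewrite -big_filter /mue.
have := filter_tm1_size wf.
have : forall p, p \in [seq p <- mu | p.1 == tm] -> p.1 = tm.
  by move=> p; rewrite mem_filter => /andP [/eqP].
case: [seq p <- mu | p.1 == tm] => [|p0 [|p1 r]] //= H _.
  by rewrite big_nil.
by rewrite big_seq1 (H p0 (mem_head _ _)) pdeg_tm1 mul1n.
Qed.

Lemma sumn_mapS l : sumn (map S l) = (sumn l + size l)%N.
Proof. by elim: l => //= x l ->; rewrite addnS addSn addnA. Qed.

Lemma bsz_k mu : wf_PPhi mu ->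
  bsz (blocks (uparrow mu (pnorm mu + size (mue mu)))) = (pnorm mu + size (mue mu))%N.
Proof.
move=> wf; rewrite blocks_up addnK subnn /= cats0 bsz_cat bsz_S0 bsz_map pdeg_tm1 mul1n.
by rewrite sumn_mapS (pnorm_split wf) addnA.
Qed.

Lemma blocks_km mu m :
  blocks (uparrow mu (pnorm mu + size (mue mu) + m)) =
  blocks (uparrow mu (pnorm mu + size (mue mu))) ++ nseq m (tm, 1%N).
Proof.
rewrite !blocks_up addnK subnn addnAC addnK addKn /= cats0 map_cat -catA.
by rewrite map_nseq.
Qed.

Lemma mue_pos mu : wf_PPhi mu -> forall x, x \in mue mu -> (0 < x)%N.
Proof.
case=> _ H x; rewrite /mue.
have : forall p, p \in [seq p <- mu | p.1 == tm] -> p \in mu.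
  by move=> p; rewrite mem_filter => /andP [].
case: [seq p <- mu | p.1 == tm] => [|p0 r] //= Hm hx.
have [_ /andP [_ /allP hp]] := H p0 (Hm p0 (mem_head _ _)).
exact: hp.
Qed.

Lemma keyprop_blocks mu : wf_PPhi mu ->
  forall p, p \in blocks (uparrow mu (pnorm mu + size (mue mu))) -> keyprop (Jmx p.1 p.2).
Proof.
move=> wf p; rewrite blocks_up addnK subnn /= cats0 mem_cat => /orP [].
  case/flatten_mapP => x; rewrite mem_filter => /andP [nx xm] /mapP [m _ ->] /=.
  by apply: keyprop_f => //; case: (wf.2 x xm).
case/mapP => m' /mapP [x hx ->] -> /=.
by apply: keyprop_tm1; rewrite ltnS (mue_pos wf hx).
Qed.

Lemma Jmat_km mu m : wf_PPhi mu ->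
  let k := (pnorm mu + size (mue mu))%N in
  Jmat (uparrow mu (k + m)) (k + m) = block_mx (Jmat (uparrow mu k) k) 0 0 1%:M.
Proof.
move=> wf k; apply/matrixP => i j; rewrite mxE blocks_km blk_cat bsz_k //.
rewrite -[i]splitK -[j]splitK; case: (split i) => i'; case: (split j) => j' /=.
- by rewrite block_mxEul !ltn_ord mxE.
- by rewrite block_mxEur ltn_ord ltnNge leq_addr mxE.
- by rewrite block_mxEdl ltn_ord ltnNge leq_addr mxE.
- by rewrite block_mxEdr !ltnNge !leq_addr /= !addKn blk_ones ltn_ord andbT mxE.
Qed.

End Lists.

Local Open Scope ring_scope.
Theorem corollary2p8 (F : finFieldType) (mu : seq ({poly F} * seq nat)) (n : nat) :
  wf_PPhi mu ->
  let k := (pnorm mu + size (mue mu))%N in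
  (k <= n)%N ->
  #|centralizer (Jmat (uparrow mu n) n)| =
    (#|centralizer (Jmat (uparrow mu k) k)| * #|GL_set F (n - k)|
     * #|[set B : 'M[F]_(k, n - k) | Jmat (uparrow mu k) k *m B == B]|
     * #|[set C : 'M[F]_(n - k, k) | C *m Jmat (uparrow mu k) k == C]|)%N.
Proof.
move=> wf k hk.
suff main : forall N m, N = (k + m)%N ->
  #|centralizer (Jmat (uparrow mu N) N)| =
    (#|centralizer (Jmat (uparrow mu k) k)| * #|GL_set F m|
     * #|[set B : 'M[F]_(k, m) | Jmat (uparrow mu k) k *m B == B]|
     * #|[set C : 'M[F]_(m, k) | C *m Jmat (uparrow mu k) k == C]|)%N.
  by apply: main; rewrite subnKC.
move=> N m e; subst N.
rewrite (Jmat_km m wf); apply: count_gen.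
apply: keyprop_Jmat; first exact: bsz_k.
exact: keyprop_blocks.
Qed.
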